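(* In the setting below, for every $i\in\{1,\dots,2n+1\}$ we have $g_0g_ig_0^{-1}=g_1^{m_{i1}}g_2^{m_{i2}}\cdots g_{2n+1}^{m_{i,2n+1}}$. In particular $H_M$ is a normal subgroup of $G_M$.
   Context: Let $n\ge 1$ and let $M=(m_{ij})\in SL(2n+1,\mathbb Z)$. Assume that $M$ has exactly one real eigenvalue $\alpha$, that $\alpha>0$, $\alpha\neq 1$, that $\alpha$ is a simple eigenvalue, and that the remaining eigenvalues are $\beta_1,\dots,\beta_k,\bar\beta_1,\dots,\bar\beta_k$ with $\mathrm{Im}\,\beta_j>0$. Let $W\subset\mathbb C^{2n+1}$ be the direct sum of the generalized eigenspaces of $M$ for $\beta_1,\dots,\beta_k$ (so $\dim_{\mathbb C}W=n$). Fix a real eigenvector $a=(a^{(1)},\dots,a^{(2n+1)})^\top\in\mathbb R^{2n+1}$ of $M$ for $\alpha$ and a basis $b_1,\dots,b_n$ of $W$, $b_j=(b_j^{(1)},\dots,b_j^{(2n+1)})^\top$, and let $R=(r_{\ell j})\in M_n(\mathbb C)$ be given by $Mb_j=\sum_{\ell=1}^n r_{\ell j}b_\ell$. For $i=1,\dots,2n+1$ put $u_i=(a^{(i)},b_1^{(i)},\dots,b_n^{(i)})^\top\in\mathbb R\times\mathbb C^n$. Let $\mathbb H=\{w\in\mathbb C:\mathrm{Im}\,w>0\}$, and define holomorphic automorphisms of $\mathbb H\times\mathbb C^n$ by $g_0(w,z)=(\alpha w,R^\top z)$ and $g_i(w,z)=(w,z)+u_i$ for $1\le i\le 2n+1$.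 Let $G_M$ be the group generated by $g_0,\dots,g_{2n+1}$ and $H_M$ the subgroup generated by $g_1,\dots,g_{2n+1}$. *)

(* Defs.v *)
From mathcomp Require Import all_boot all_order all_algebra.
From mathcomp Require Import reals.
From mathcomp.real_closed Require Import complex.
Set Implicit Arguments. Unset Strict Implicit. Unset Printing Implicit Defensive.
Import Order.TTheory GRing.Theory Num.Theory.
Local Open Scope ring_scope.
Local Open Scope complex_scope.

Section Defs.
Variable R : realType.
Local Notation C := R[i].

Definition Hpt (n : nat) := {p : C * 'cV[C]_n | 0 < complex.Im p.1}.

Lemma Im_scale_pos (al : R) (w : C) :
  0 < al -> 0 < complex.Im w -> 0 < complex.Im (al%:C * w).
Proof.
move=> hal hw; case: w hw => x y /= hy.
by rewrite mul0r addr0 mulr_gt0.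
Qed.

Lemma Im_transl_pos (x : R) (w : C) :
  0 < complex.Im w -> 0 < complex.Im (w + x%:C).
Proof. by case: w => u v /=; rewrite addr0. Qed.

Definition g0map n (al : R) (hal : 0 < al) (Rm : 'M[C]_n) (p : Hpt n) : Hpt n :=
  exist _ (al%:C * (val p).1, Rm^T *m (val p).2)
        (@Im_scale_pos al (val p).1 hal (valP p)).

Definition transl n (x : R) (v : 'cV[C]_n) (p : Hpt n) : Hpt n :=
  exist _ ((val p).1 + x%:C, (val p).2 + v) (@Im_transl_pos x (val p).1 (valP p)).

End Defs.

(* integer power f^m of a bijection f with inverse finv *)
Definition zit (T : Type) (f finv : T -> T) (m : int) : T -> T :=
  match m with
  | Posz k => iter k f
  | Negz k => iter k.+1 finv
  end.

(* subgroup of the group of bijections of T generated by the set S of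
   bijections: the smallest set of maps containing S and id, closed under
   composition and under taking (two-sided) inverses *)
Definition gen_group (T : Type) (S : (T -> T) -> Prop) (f : T -> T) : Prop :=
  forall G : (T -> T) -> Prop,
    G id -> (forall g, S g -> G g) ->
    (forall g h, G g -> G h -> G (g \o h)) ->
    (forall g ginv, G g -> cancel g ginv -> cancel ginv g -> G ginv) ->
    G f.

Definition normal_sub (T : Type) (H G : (T -> T) -> Prop) : Prop :=
  (forall h, H h -> G h) /\
  (forall g ginv h, G g -> cancel g ginv -> cancel ginv g -> H h ->
     H (g \o h \o ginv)).

Definition gen_eig (K : pzRingType) m (A : 'M[K]_m) (b : K) (v : 'cV[K]_m) : Prop :=
  exists k : nat, (A - b%:M) ^+ k *m v = 0.

Definition Wspace (R : realType) m (A : 'M[R[i]]_m) (v : 'cV[R[i]]_m) : Prop :=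
  exists (s : seq R[i]) (vs : R[i] -> 'cV[R[i]]_m),
    (forall b, b \in s -> 0 < complex.Im b) /\
    (forall b, b \in s -> gen_eig A b (vs b)) /\
    v = \sum_(b <- s) vs b.

(* Main.v *)
Require Import Defs.
From mathcomp Require Import all_boot all_order all_algebra.
From mathcomp Require Import reals.
From mathcomp.real_closed Require Import complex.
From Stdlib Require Import FunctionalExtensionality.
Import Order.TTheory GRing.Theory Num.Theory.
Local Open Scope ring_scope.
Local Open Scope complex_scope.
Set Implicit Arguments.


Section GG.
Variables (T : Type) (S : (T -> T) -> Prop).
Lemma gg_S g : S g -> gen_group S g.
Proof. by move=> Sg G _ hS _ _; apply: hS. Qed.
Lemma gg_id : gen_group S id.
Proof. by move=> G hid. Qed.
Lemma gg_comp g h : gen_group S g -> gen_group S h -> gen_group S (g \o h).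
Proof. move=> Hg Hh G h1 h2 h3 h4; exact: (h3 g h (Hg G h1 h2 h3 h4) (Hh G h1 h2 h3 h4)). Qed.
Lemma gg_inv g ginv : gen_group S g -> cancel g ginv -> cancel ginv g ->
  gen_group S ginv.
Proof. move=> Hg c1 c2 G h1 h2 h3 h4; exact: (h4 g ginv (Hg G h1 h2 h3 h4) c1 c2). Qed.
Lemma gg_mono (S' : (T -> T) -> Prop) f : (forall g, S g -> S' g) ->
  gen_group S f -> gen_group S' f.
Proof.
move=> sub Hf G h1 h2 h3 h4; apply: Hf => //.
by move=> g /sub; apply: h2.
Qed.
Lemma gg_iter g k : gen_group S g -> gen_group S (iter k g).
Proof.
move=> Hg; elim: k => [|k IH]; first exact: gg_id.
have -> : iter k.+1 g = g \o iter k g by [].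
exact: gg_comp.
Qed.
End GG.

Section Tr.
Variables (R : realType) (n : nat).
Local Notation C := R[i].

Lemma transl_eq x v y w (p : Hpt R n) : x = y -> v = w -> transl x v p = transl y w p.
Proof. by move=> -> ->. Qed.


Lemma transl_comp x v y w (p : Hpt R n) :
  transl x v (transl y w p) = transl (y + x) (w + v) p.
Proof. by apply: val_inj; rewrite /= rmorphD !addrA. Qed.

Lemma transl0 (p : Hpt R n) : transl 0 0 p = p.
Proof. by apply: val_inj; rewrite /= rmorph0 !addr0; case: (val p). Qed.

Lemma transl_cancel (x : R) (v : 'cV[C]_n) : cancel (transl x v) (transl (- x) (- v)).
Proof. by move=> p; rewrite transl_comp !subrr transl0. Qed.
Lemma transl_cancel' (x : R) (v : 'cV[C]_n) : cancel (transl (- x) (- v)) (transl x v).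
Proof. by move=> p; rewrite transl_comp !addNr transl0. Qed.

Lemma iter_transl x v k (p : Hpt R n) :
  iter k (transl x v) p = transl (x *+ k) (v *+ k) p.
Proof.
elim: k => [|k IH]; first by rewrite !mulr0n transl0.
by rewrite iterS IH transl_comp !mulrSr.
Qed.

Lemma zit_transl (x : R) (v : 'cV[C]_n) m :
  zit (transl x v) (transl (- x) (- v)) m = transl (x *~ m) (v *~ m).
Proof.
apply: functional_extensionality => p.
case: m => k; rewrite /zit iter_transl //.
by rewrite !mulNrn.
Qed.

Lemma foldr_transl (I : Type) (c : I -> R) (d : I -> 'cV[C]_n) (s : seq I) (p : Hpt R n) :
  foldr (fun k f => transl (c k) (d k) \o f) id s p
  = transl (\sum_(k <- s) c k) (\sum_(k <- s) d k) p.
Proof.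
elim: s => [|k s IH] /=; first by rewrite !big_nil transl0.
by rewrite IH transl_comp !big_cons [c k + _]addrC [d k + _]addrC.
Qed.
End Tr.

Unset Implicit Arguments.


Section Comp.
Variables (R : realType) (n N : nat).
Local Notation C := R[i].

Lemma foldr_zit (x : 'I_N -> R) (v : 'I_N -> 'cV[C]_n) (c : 'I_N -> int) :
 foldr (fun k f => zit (transl (x k) (v k)) (transl (- x k) (- v k)) (c k) \o f) id (enum 'I_N)
 = transl (\sum_k x k *~ c k) (\sum_k v k *~ c k).
Proof.
have -> : (fun k f => zit (transl (x k) (v k)) (transl (- x k) (- v k)) (c k) \o f)
   = (fun k (f : Hpt R n -> Hpt R n) => transl (x k *~ c k) (v k *~ c k) \o f).
  by apply: functional_extensionality => k; apply: functional_extensionality => f; rewrite zit_transl.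
apply: functional_extensionality => p; rewrite foldr_transl.
by rewrite !big_enum.
Qed.

Lemma E1 (b : 'I_n -> 'cV[C]_N) (Nm : 'M[int]_N) i :
  \sum_k (\col_(j < n) b j k 0) *~ Nm i k
  = \col_(j < n) ((map_mx (fun z : int => z%:~R : C) Nm) *m b j) i 0.
Proof.
apply/matrixP => j l; rewrite !mxE summxE; apply: eq_bigr => k _.
by rewrite -scaler_int !mxE mulrC.
Qed.

Lemma E3 (a : 'cV[R]_N) (Nm : 'M[int]_N) i :
  \sum_k a k 0 *~ Nm i k = ((map_mx (fun z : int => z%:~R : R) Nm) *m a) i 0.
Proof.
rewrite mxE; apply: eq_bigr => k _.
by rewrite mxE mulrzl.
Qed.

Lemma E2 (b : 'I_n -> 'cV[C]_N) (MC X : 'M[C]_N) (Rm : 'M[C]_n) i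
  (hR : forall j, MC *m b j = \sum_(l < n) Rm l j *: b l) :
  Rm^T *m \col_(j < n) (X *m b j) i 0 = \col_(j < n) (X *m MC *m b j) i 0.
Proof.
apply/matrixP => j l; rewrite [in RHS]mxE -mulmxA hR mulmx_sumr summxE.
rewrite mxE; apply: eq_bigr => k _; rewrite -scalemxAr !mxE.
by [].
Qed.
Lemma E2' (b : 'I_n -> 'cV[C]_N) (MC : 'M[C]_N) (Rm : 'M[C]_n) i
  (hR : forall j, MC *m b j = \sum_(l < n) Rm l j *: b l) :
  Rm^T *m \col_(j < n) b j i 0 = \col_(j < n) (MC *m b j) i 0.
Proof.
apply/matrixP => j l; rewrite [in RHS]mxE hR summxE.
rewrite mxE; apply: eq_bigr => k _; rewrite !mxE.
by [].
Qed.
End Comp.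



Theorem lemma2p3 (R : realType) (n : nat) (hn : (0 < n)%N)
  (M : 'M[int]_(n.*2.+1))
  (hdet : \det M = 1)
  (al : R) (hal : 0 < al) (hal1 : al != 1)
  (heig : eigenvalue (map_mx (fun z : int => z%:~R : R[i]) M) al%:C)
  (hsimple : mup al%:C (char_poly (map_mx (fun z : int => z%:~R : R[i]) M)) = 1%N)
  (honlyreal : forall l : R[i],
      eigenvalue (map_mx (fun z : int => z%:~R : R[i]) M) l ->
      complex.Im l = 0 -> l = al%:C)
  (a : 'cV[R]_(n.*2.+1)) (ha0 : a != 0)
  (ha : map_mx (fun z : int => z%:~R : R) M *m a = al *: a)
  (b : 'I_n -> 'cV[R[i]]_(n.*2.+1))
  (hbW : forall j, Wspace (map_mx (fun z : int => z%:~R : R[i]) M) (b j))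
  (hbfree : forall c : 'I_n -> R[i], \sum_(j < n) c j *: b j = 0 ->
              forall j, c j = 0)
  (hbspan : forall v, Wspace (map_mx (fun z : int => z%:~R : R[i]) M) v ->
              exists c : 'I_n -> R[i], v = \sum_(j < n) c j *: b j)
  (Rm : 'M[R[i]]_n)
  (hR : forall j, map_mx (fun z : int => z%:~R : R[i]) M *m b j
                  = \sum_(l < n) Rm l j *: b l) :
  let g0 := g0map hal Rm in
  let g := fun i : 'I_(n.*2.+1) => transl (a i 0) (\col_(j < n) b j i 0) in
  let ginv := fun i : 'I_(n.*2.+1) => transl (- a i 0) (- \col_(j < n) b j i 0) in
  let G_M := gen_group (fun f => f = g0 \/ exists i, f = g i) in
  let H_M := gen_group (fun f => exists i, f = g i) in
  (exists g0inv, cancel g0 g0inv /\ cancel g0inv g0) /\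
  (forall g0inv, cancel g0 g0inv -> cancel g0inv g0 ->
     forall i : 'I_(n.*2.+1),
       g0 \o g i \o g0inv
       = foldr (fun k f => zit (g k) (ginv k) (M i k) \o f) id
               (enum 'I_(n.*2.+1))) /\
  normal_sub H_M G_M.
Proof.
move=> g0 g ginv; cbv zeta.
set SH := (fun f : Hpt R n -> Hpt R n => exists i, f = g i).
set SG := (fun f : Hpt R n -> Hpt R n => f = g0 \/ exists i, f = g i).
set MC := map_mx (fun z : int => z%:~R : R[i]) M in heig hsimple honlyreal hbW hbspan hR *.
set MR := map_mx (fun z : int => z%:~R : R) M in ha.
have Munit : M \in unitmx by rewrite unitmxE hdet unitr1.
set Mi := invmx M.
have hMiM : Mi *m M = 1%:M by rewrite mulVmx.
have MCinj : forall w : 'cV[R[i]]_(n.*2.+1), MC *m w = 0 -> w = 0.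
  move=> w hw.
  have : (map_mx (fun z : int => z%:~R : R[i]) (Mi *m M)) *m w = 0.
    by rewrite map_mxM -mulmxA hw mulmx0.
  by rewrite hMiM map_mx1 mul1mx.
have Rmunit : Rm^T \in unitmx.
  rewrite unitmxE unitfE; apply/negP => /det0P [v vnz hv].
  have hc : \sum_(j < n) v 0 j *: b j = 0.
    apply: MCinj.
    rewrite mulmx_sumr.
    under eq_bigr => j _ do rewrite -scalemxAr hR scaler_sumr.
    rewrite exchange_big /=; apply: big1 => l _.
    have h : (v *m Rm^T) 0 l = 0 by rewrite hv mxE.
    rewrite mxE in h.
    under eq_bigr => j _ do rewrite scalerA.
    rewrite -scaler_suml.
    rewrite (eq_bigr (fun j => v 0 j * Rm^T j l)); last by move=> j _; rewrite mxE.
    by rewrite h scale0r.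
  move/eqP: vnz; apply; apply/matrixP => i j; rewrite (ord1 i) mxE.
  exact: hbfree hc j.
have hal0 : al != 0 by rewrite gt_eqF.
have hali : 0 < al^-1 by rewrite invr_gt0.
have g0c : cancel g0 (g0map hali (invmx Rm^T)^T) /\ cancel (g0map hali (invmx Rm^T)^T) g0.
  split => -[[ww zz] hp]; apply: val_inj => /=;
  rewrite trmxK mulmxA ?mulVmx ?mulmxV // mul1mx mulrA -rmorphM ?mulVf ?mulfV // rmorph1 mul1r //.
have conj0 : forall g0inv, cancel g0 g0inv -> cancel g0inv g0 -> forall i,
   g0 \o g i \o g0inv = transl (\sum_k a k 0 *~ M i k)
                               (\sum_k (\col_(j < n) b j k 0) *~ M i k).
  move=> g0inv c1 c2 i; apply: functional_extensionality => p /=.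
  rewrite -[in RHS](c2 p); move: (g0inv p) => q.
  case: q => [[ww zz] hp]; apply: val_inj => /=.
  have e2 := @E2' _ _ _ _ _ _ i hR.
  rewrite E3 E1 ha mxE mulrDr -rmorphM mulmxDr e2.
  by [].
split; first by exists (g0map hali (invmx Rm^T)^T).
split.
  move=> g0inv c1 c2 i; rewrite conj0 //.
  rewrite /g /ginv; symmetry; exact (@foldr_zit _ _ _ (fun k => a k 0) (fun k => \col_(j<n) b j k 0) (fun k => M i k)).
have Hg : forall i, gen_group SH (g i) by move=> i; apply: gg_S; exists i.
have Hginv : forall i, gen_group SH (ginv i).
  move=> i; exact (gg_inv (Hg i) (@transl_cancel _ _ _ _) (@transl_cancel' _ _ _ _)).
have Hlin0 : forall c : 'I_(n.*2.+1) -> int,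
    gen_group SH (foldr (fun k f => zit (g k) (ginv k) (c k) \o f) id (enum 'I_(n.*2.+1))).
  move=> c; elim: (enum _) => [|k s IH] /=; first exact: gg_id.
  apply: gg_comp => //; case: (c k) => m /=; exact: gg_iter.
have Hlin : forall c : 'I_(n.*2.+1) -> int,
    gen_group SH (transl (\sum_k a k 0 *~ c k) (\sum_k (\col_(j < n) b j k 0) *~ c k)).
  move=> c; move: (Hlin0 c); rewrite /g /ginv.
  by rewrite (@foldr_zit _ _ _ (fun k => a k 0) (fun k => \col_(j<n) b j k 0) c).
set MiR := map_mx (fun z : int => z%:~R : R) Mi.
set MiC := map_mx (fun z : int => z%:~R : R[i]) Mi.
have hMiC : MiC *m MC = 1%:M by rewrite -map_mxM hMiM map_mx1.
have hMiR : MiR *m MR = 1%:M by rewrite -map_mxM hMiM map_mx1.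
have haa : al *: (MiR *m a) = a.
  by rewrite scalemxAr -ha mulmxA hMiR mul1mx.
have hai : forall i, al * (MiR *m a) i 0 = a i 0.
  by move=> i; rewrite -[in RHS]haa [in RHS]mxE.
have conj0' : forall g0inv, cancel g0 g0inv -> cancel g0inv g0 -> forall i,
   g0inv \o g i \o g0 = transl (\sum_k a k 0 *~ Mi i k)
                               (\sum_k (\col_(j < n) b j k 0) *~ Mi i k).
  move=> g0inv c1 c2 i; apply: functional_extensionality => p /=.
  suff -> : g i (g0 p) = g0 (transl (\sum_k a k 0 *~ Mi i k)
                               (\sum_k (\col_(j < n) b j k 0) *~ Mi i k) p) by rewrite c1.
  case: p => [[ww zz] hp]; apply: val_inj => /=.
  rewrite E3 E1 mulrDr mulmxDr -rmorphM hai.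
  rewrite (@E2 _ _ _ _ MC) // hMiC.
  congr (_, _ + _); apply/matrixP => j l.
  by rewrite mxE [RHS]mxE mul1mx.
have Hg0 : forall g0inv, cancel g0 g0inv -> cancel g0inv g0 ->
    forall h, gen_group SH h ->
    gen_group SH (g0 \o h \o g0inv) /\ gen_group SH (g0inv \o h \o g0).
  move=> g0inv c1 c2 h Hh.
  apply: (Hh (fun h => gen_group SH (g0 \o h \o g0inv) /\ gen_group SH (g0inv \o h \o g0))).
  - split.
      have -> : g0 \o id \o g0inv = id by apply: functional_extensionality => x; exact: c2.
      exact: gg_id.
    have -> : g0inv \o id \o g0 = id by apply: functional_extensionality => x; exact: c1.
    exact: gg_id.
  - move=> f [i ->]; split; [rewrite conj0 // | rewrite conj0' //]; exact: Hlin.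
  - move=> f1 f2 [A1 B1] [A2 B2]; split.
      have -> : g0 \o (f1 \o f2) \o g0inv = (g0 \o f1 \o g0inv) \o (g0 \o f2 \o g0inv).
        by apply: functional_extensionality => x /=; rewrite c1.
      exact: gg_comp.
    have -> : g0inv \o (f1 \o f2) \o g0 = (g0inv \o f1 \o g0) \o (g0inv \o f2 \o g0).
      by apply: functional_extensionality => x /=; rewrite c2.
    exact: gg_comp.
  - move=> f finv [A B] cf1 cf2; split.
      by apply: (gg_inv A) => x /=; rewrite ?c1 ?cf1 ?cf2 ?c2.
    by apply: (gg_inv B) => x /=; rewrite ?c2 ?cf1 ?cf2 ?c1.
have key : forall f, gen_group SG f ->
    (exists k, cancel f k /\ cancel k f) /\
    (forall k, cancel f k -> cancel k f -> forall h, gen_group SH h ->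
        gen_group SH (f \o h \o k) /\ gen_group SH (k \o h \o f)).
  move=> f Gf.
  apply: (Gf (fun f => (exists k, cancel f k /\ cancel k f) /\
    (forall k, cancel f k -> cancel k f -> forall h, gen_group SH h ->
        gen_group SH (f \o h \o k) /\ gen_group SH (k \o h \o f)))).
  - split; first by exists id.
    move=> k c1 c2 h0 H0.
    have ek : k = id by apply: functional_extensionality => x; exact: c2.
    by subst k; split.
  - move=> f0 [->|[i ->]].
      split; first by exists (g0map hali (invmx Rm^T)^T).
      by move=> k c1 c2 h0 H0; apply: Hg0.
    split; first by exists (ginv i); split; [exact: transl_cancel | exact: transl_cancel'].
    move=> k c1 c2 h0 H0.
    have Hk : gen_group SH k := gg_inv (Hg i) c1 c2.
    by split; apply: gg_comp => //; apply: gg_comp.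
  - move=> f1 f2 [[k1 [a1 b1]] P1] [[k2 [a2 b2]] P2]; split.
      by exists (k2 \o k1); split => x /=; [rewrite a1 a2 | rewrite b2 b1].
    move=> k c1 c2 h0 H0.
    have ek : k = k2 \o k1.
      apply: functional_extensionality => x.
      by move: (c1 ((k2 \o k1) x)) => /=; rewrite b2 b1.
    subst k.
    case: (P1 k1 a1 b1 _ (P2 k2 a2 b2 h0 H0).1) => A _.
    case: (P2 k2 a2 b2 _ (P1 k1 a1 b1 h0 H0).2) => _ B.
    by split; [exact: A | exact: B].
  - move=> f0 finv [[k [a1 b1]] Pf] cf1 cf2; split; first by exists f0.
    move=> k' c1 c2 h0 H0.
    have ek : k' = f0.
      by apply: functional_extensionality => x; rewrite -{1}(cf1 x) c1.
    subst k'.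
    by case: (Pf finv cf1 cf2 h0 H0) => A B; split.
split.
  move=> h; apply: gg_mono => f [i ->]; right; by exists i.
move=> f finv h Gf cf1 cf2 Hh.
by case: ((key f Gf).2 finv cf1 cf2 h Hh).
Qed.
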